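(* For every $k\in\mathbb N$, $\psi_k(\mathrm{Rist}_{G_3}(\widehat k))=H_k\times\cdots\times H_k$ ($3^k$ factors). In particular, $\psi_k(\mathrm{Rist}_{G_3}(1\cdots1))=H_k\times\{e\}\times\cdots\times\{e\}$ for the vertex $1\cdots1$ of length $k$.
   Context: Let $X=\{1,2,3\}$ and $T$ the ternary rooted tree with vertex set $X^*$. $\mathrm{Aut}(T)$ is the group of root-preserving automorphisms with product left-to-right: $(gh)(u)=h(g(u))$. Sections $g|_u$ are defined by $g(uv)=g(u)\,g|_u(v)$; we write $g=(g|_1,g|_2,g|_3)\lambda_g$; $e$ is the identity. $G_3=\langle A\rangle\le\mathrm{Aut}(T)$, $A=\{a,b,c\}$, with $a=(a,b,e)(1\,2)$, $b=(e,b,c)(2\,3)$, $c=(a,e,c)(3\,1)$. For a word $w$ over $A\cup A^{-1}$, $|w|_A$ is its total exponent sum (well defined on elements of $G_3$ since relators have zero exponent sums). $H_k=\{g\in G_3:|g|_A\equiv0\pmod{2^{k+1}}\}$. $\mathrm{St}_{G_3}(\widehat k)$ is the subgroup fixing every vertex of level $k$, and $\psi_k:\mathrm{St}_{G_3}(\widehat k)\to G_3^{3^k}$, $g\mapsto (g|_u)_{u\in X^k}$ (lexicographic order of $X^k$) is the injective homomorphism. For a vertex $u$, $\mathrm{Rist}_{G_3}(u)$ is the subgroup of elements acting trivially on all vertices outside the subtree rooted at $u$; $\mathrm{Rist}_{G_3}(\widehat k)$ is the subgroup generated by $\bigcup_{|u|=k}\mathrm{Rist}_{G_3}(u)$. 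*)

(* Defs.v *)
From Stdlib Require Import List ZArith.
Import ListNotations.

Inductive X : Type := X1 | X2 | X3.

Inductive Gen : Type := Ga | Gb | Gc.

(* One step of the action of a generator (i = false) or of its inverse
   (i = true) on the first letter x of a vertex: returns the image letter and
   the section at x (None = identity e, Some (s, i') = s^{+-1}).
   a = (a,b,e)(1 2), b = (e,b,c)(2 3), c = (a,e,c)(3 1),
   g(xv) = lambda_g(x) g|_x(v);  g^{-1}(lambda_g(x) w) = x (g|_x)^{-1}(w). *)
Definition step (s : Gen) (i : bool) (x : X) : X * option (Gen * bool) :=
  match s, i, x with
  | Ga, false, X1 => (X2, Some (Ga, false))
  | Ga, false, X2 => (X1, Some (Gb, false))
  | Ga, false, X3 => (X3, None)
  | Gb, false, X1 => (X1, None)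
  | Gb, false, X2 => (X3, Some (Gb, false))
  | Gb, false, X3 => (X2, Some (Gc, false))
  | Gc, false, X1 => (X3, Some (Ga, false))
  | Gc, false, X2 => (X2, None)
  | Gc, false, X3 => (X1, Some (Gc, false))
  | Ga, true, X2 => (X1, Some (Ga, true))
  | Ga, true, X1 => (X2, Some (Gb, true))
  | Ga, true, X3 => (X3, None)
  | Gb, true, X1 => (X1, None)
  | Gb, true, X3 => (X2, Some (Gb, true))
  | Gb, true, X2 => (X3, Some (Gc, true))
  | Gc, true, X3 => (X1, Some (Ga, true))
  | Gc, true, X2 => (X2, None)
  | Gc, true, X1 => (X3, Some (Gc, true))
  end.

Fixpoint gact (s : Gen) (i : bool) (u : list X) : list X :=
  match u with
  | [] => []
  | x :: v =>
      match step s i x with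
      | (y, None) => y :: v
      | (y, Some (s', i')) => y :: gact s' i' v
      end
  end.

(* Words over A ∪ A^{-1}: a letter (s, false) is s, (s, true) is s^{-1}. *)
Definition word := list (Gen * bool).

(* Action of a word; product is left-to-right: (gh)(u) = h(g(u)). *)
Definition act (w : word) (u : list X) : list X :=
  fold_left (fun v l => gact (fst l) (snd l) v) w u.

Definition equiv (w w' : word) : Prop := forall u, act w u = act w' u.

Definition winv (w : word) : word := rev (map (fun l => (fst l, negb (snd l))) w).

Definition expsum (w : word) : Z :=
  fold_right (fun (l : Gen * bool) (z : Z) => ((if snd l then (-1)%Z else 1%Z) + z)%Z) 0%Z w.

(* H_k = { g in G_3 : |g|_A = 0 mod 2^(k+1) } (|.|_A is well defined on G_3). *)
Definition InH (k : nat) (g : word) : Prop :=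
  exists w, equiv w g /\ Z.divide (2 ^ Z.of_nat (S k))%Z (expsum w).

(* Section g|_u as a map on vertices: g(uv) = g(u) g|_u(v). *)
Definition sect (w : word) (u : list X) (v : list X) : list X :=
  skipn (length u) (act w (u ++ v)).

Definition InRist (u : list X) (w : word) : Prop :=
  forall v, (~ exists t, v = u ++ t) -> act w v = v.

(* Rist_{G_3}(\hat k): subgroup generated by the union of Rist(u), |u| = k:
   products of elements of the union and their inverses. *)
Definition InRistLevel (k : nat) (w : word) : Prop :=
  exists l : list (list X * word * bool),
    (forall p, In p l -> length (fst (fst p)) = k /\ InRist (fst (fst p)) (snd (fst p))) /\
    equiv w (concat (map (fun p : list X * word * bool => if snd p then winv (snd (fst p)) else snd (fst p)) l)).

Definition ones (k : nat) : list X := repeat X1 k.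

(* Main.v *)
Require Import Defs.
From Stdlib Require Import List ZArith Lia Bool.
Import ListNotations.


Lemma act_app : forall w1 w2 v, act (w1 ++ w2) v = act w2 (act w1 v).
Proof. intros. unfold act. now rewrite fold_left_app. Qed.

Lemma act_cons_l : forall l w v, act (l :: w) v = act w (gact (fst l) (snd l) v).
Proof. reflexivity. Qed.

Lemma gact_nil : forall s i, gact s i [] = [].
Proof. reflexivity. Qed.

Lemma act_nilv : forall w, act w [] = [].
Proof. induction w as [|l w IH]; [reflexivity|]. rewrite act_cons_l, gact_nil. exact IH. Qed.

Definition optw (o : option (Gen * bool)) : word :=
  match o with None => [] | Some l => [l] end.

Lemma gact_cons : forall s i x v,
  gact s i (x :: v) = fst (step s i x) :: act (optw (snd (step s i x))) v.
Proof. intros. simpl. destruct (step s i x) as [y [[s' i']|]]; reflexivity. Qed.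

Fixpoint sec1 (w : word) (x : X) : X * word :=
  match w with
  | [] => (x, [])
  | l :: w' => let (y, o) := step (fst l) (snd l) x in
               let (z, t) := sec1 w' y in (z, optw o ++ t)
  end.

Lemma act_sec1 : forall w x v, act w (x :: v) = fst (sec1 w x) :: act (snd (sec1 w x)) v.
Proof.
  induction w as [|l w IH]; intros x v; [reflexivity|].
  rewrite act_cons_l, gact_cons. simpl.
  destruct (step (fst l) (snd l) x) as [y o]. simpl.
  rewrite IH. destruct (sec1 w y) as [z t]. simpl. now rewrite act_app.
Qed.

Lemma gact_inv : forall v s i, gact s (negb i) (gact s i v) = v.
Proof.
  induction v as [|x v IH]; intros s i; [reflexivity|].
  destruct s, i, x; simpl; f_equal; try reflexivity;
  first [apply (IH _ true) | apply (IH _ false) | symmetry; apply (IH _ true) | symmetry; apply (IH _ false)].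
Qed.

Definition flip (l : Gen * bool) : Gen * bool := (fst l, negb (snd l)).

Lemma winv_cons : forall l w, winv (l :: w) = winv w ++ [flip l].
Proof. reflexivity. Qed.

Lemma act_w_winv : forall w v, act (w ++ winv w) v = v.
Proof.
  induction w as [|l w IH]; intros v; [reflexivity|].
  rewrite winv_cons. simpl (( l :: w) ++ _). rewrite act_cons_l.
  rewrite app_assoc, act_app, IH. simpl. unfold flip. destruct l as [s i]. simpl.
  apply gact_inv.
Qed.

Lemma winv_winv : forall w, winv (winv w) = w.
Proof.
  intros. unfold winv. rewrite map_rev, rev_involutive, map_map.
  induction w as [|[s i] w IH]; simpl; [reflexivity|]. rewrite negb_involutive. now f_equal.
Qed.

Lemma act_winv_w : forall w v, act (winv w ++ w) v = v.
Proof. intros. rewrite <- (winv_winv w) at 2. apply act_w_winv. Qed.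

Lemma act_winv_l : forall w v, act (winv w) (act w v) = v.
Proof. intros. rewrite <- act_app. apply act_w_winv. Qed.
Lemma act_winv_r : forall w v, act w (act (winv w) v) = v.
Proof. intros. rewrite <- act_app. apply act_winv_w. Qed.

Lemma winv_app : forall w1 w2, winv (w1 ++ w2) = winv w2 ++ winv w1.
Proof. intros. unfold winv. now rewrite map_app, rev_app_distr. Qed.

Lemma expsum_app : forall w1 w2, expsum (w1 ++ w2) = (expsum w1 + expsum w2)%Z.
Proof. intros. unfold expsum. rewrite fold_right_app. induction w1 as [|l w1 IH]; simpl.
  - induction w2; reflexivity.
  - rewrite IH. lia. Qed.

Lemma expsum_cons : forall l w, expsum (l :: w) = ((if snd l then (-1) else 1) + expsum w)%Z.
Proof. reflexivity. Qed.

Lemma expsum_winv : forall w, expsum (winv w) = (- expsum w)%Z.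
Proof.
  induction w as [|l w IH]; [reflexivity|].
  rewrite winv_cons, expsum_app, IH. destruct l as [s i].
  change (expsum ((s,i)::w)) with ((if i then -1 else 1) + expsum w)%Z.
  destruct i.
  - change (expsum [flip (s,true)]) with 1%Z. lia.
  - change (expsum [flip (s,false)]) with (-1)%Z. lia.
Qed.

Definition gen_eqb (s t : Gen) : bool :=
  match s, t with Ga, Ga | Gb, Gb | Gc, Gc => true | _, _ => false end.
Definition leqb (l m : Gen * bool) : bool := gen_eqb (fst l) (fst m) && Bool.eqb (snd l) (snd m).
Lemma leqb_eq : forall l m, leqb l m = true -> l = m.
Proof. intros [s i] [t j]. unfold leqb. simpl. destruct s, t; simpl; try discriminate;
  intros H; apply Bool.eqb_prop in H; now subst. Qed.

Definition push (st : word) (l : Gen * bool) : word :=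
  match st with
  | m :: st' => if leqb m (flip l) then st' else l :: st
  | [] => [l]
  end.
Definition freered (w : word) : word := rev (fold_left push w []).

Lemma push_sound : forall st l v, act (rev (push st l)) v = act (rev st ++ [l]) v.
Proof.
  intros [|m st] l v; [reflexivity|]. simpl.
  destruct (leqb m (flip l)) eqn:E; [|reflexivity].
  apply leqb_eq in E. subst m. rewrite <- app_assoc, act_app. simpl.
  destruct l as [s i]. unfold flip. simpl.
  symmetry; pose proof (gact_inv (act (rev st) v) s (negb i)) as G.
  rewrite negb_involutive in G; exact G.
Qed.

Lemma freered_gen : forall w st v, act (rev (fold_left push w st)) v = act (rev st ++ w) v.
Proof.
  induction w as [|l w IH]; intros st v; simpl.
  - now rewrite app_nil_r.
  - rewrite IH, act_app, push_sound, <- act_app, <- app_assoc. reflexivity.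
Qed.

Lemma freered_sound : forall w v, act (freered w) v = act w v.
Proof. intros. unfold freered. now rewrite freered_gen. Qed.

Definition isnil (w : word) : bool := match w with [] => true | _ => false end.
Definition xeqb (x y : X) : bool :=
  match x, y with X1, X1 | X2, X2 | X3, X3 => true | _, _ => false end.
Lemma xeqb_eq : forall x y, xeqb x y = true -> x = y.
Proof. intros [] []; simpl; congruence. Qed.

Lemma freered_nil : forall w, isnil (freered w) = true -> forall v, act w v = v.
Proof. intros w H v. rewrite <- freered_sound. destruct (freered w); [reflexivity|discriminate]. Qed.

Definition LPx (x : X) (Q h : word) : Prop :=
  (forall v, act Q (x :: v) = x :: act h v) /\
  (forall y v, y <> x -> act Q (y :: v) = y :: v) /\
  (2 * expsum Q = expsum h)%Z.

Definition goodb (Q z : word) : bool :=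
  let '(y1, s1) := sec1 Q X1 in let '(y2, s2) := sec1 Q X2 in let '(y3, s3) := sec1 Q X3 in
  xeqb y1 X1 && xeqb y2 X2 && xeqb y3 X3 && isnil (freered (s1 ++ winv z))
  && isnil (freered s2) && isnil (freered s3) && Z.eqb (2 * expsum Q) (expsum z).

Lemma goodb_sound : forall Q z, goodb Q z = true -> LPx X1 Q z.
Proof.
  intros Q z. unfold goodb.
  pose proof (act_sec1 Q X1) as A1. pose proof (act_sec1 Q X2) as A2. pose proof (act_sec1 Q X3) as A3.
  destruct (sec1 Q X1) as [y1 s1], (sec1 Q X2) as [y2 s2], (sec1 Q X3) as [y3 s3]. simpl in *.
  intros H. repeat rewrite andb_true_iff in H.
  destruct H as [[[[[[H1 H2] H3] H4] H5] H6] H7].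
  apply xeqb_eq in H1, H2, H3. subst.
  apply Z.eqb_eq in H7.
  split; [|split]; auto.
  - intros v. rewrite A1. f_equal.
    pose proof (freered_nil _ H4 v) as E. rewrite act_app in E.
    rewrite <- E at 2. now rewrite act_winv_r.
  - intros y v Hy. destruct y; [congruence| |].
    + rewrite A2. f_equal. now apply freered_nil.
    + rewrite A3. f_equal. now apply freered_nil.
Qed.

Inductive Res := Rm1 | R0 | R1 | R2.
Definition resZ (r : Res) : Z := match r with Rm1 => -1 | R0 => 0 | R1 => 1 | R2 => 2 end.
Definition apow (r : Res) : word :=
  match r with Rm1 => [(Ga,true)] | R0 => [] | R1 => [(Ga,false)] | R2 => [(Ga,false);(Ga,false)] end.
Definition nextp (r : Res) : Res := match r with Rm1 => R0 | R0 => R1 | R1 => R2 | R2 => Rm1 end.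
Definition prevp (r : Res) : Res := match r with Rm1 => R2 | R0 => Rm1 | R1 => R0 | R2 => R1 end.
Definition tgtp (r : Res) (s : Gen) : word := apow r ++ [(s,false)] ++ winv (apow (nextp r)).

Definition liftp (r : Res) (s : Gen) : word :=
  match r, s with
  | Rm1, Gb => [(Ga,true); (Gb,false); (Gc,true); (Gb,true); (Gc,true); (Gb,false); (Gc,false); (Ga,false)]
  | R0, Gb => [(Gb,true); (Gc,true); (Gb,false); (Gc,false); (Gb,false); (Gc,true)]
  | R1, Gb => [(Ga,false); (Gb,false); (Gc,true); (Gb,true); (Gc,true); (Gb,false); (Gc,false); (Ga,true)]
  | R2, Gb => [(Ga,false); (Gc,true); (Gb,true); (Gc,false); (Gb,false); (Ga,false); (Ga,false); (Gc,false); (Ga,true); (Ga,true); (Gb,true); (Ga,false)]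
  | Rm1, Gc => [(Gc,true); (Ga,false); (Gb,false); (Ga,true); (Gb,true); (Ga,true); (Gb,false); (Gc,false)]
  | R0, Gc => [(Ga,true); (Gb,false); (Ga,false); (Gb,false); (Ga,true); (Gb,true)]
  | R1, Gc => [(Gc,false); (Ga,false); (Gb,false); (Ga,true); (Gb,true); (Ga,true); (Gb,false); (Gc,true)]
  | R2, Gc => [(Gc,false); (Gb,true); (Ga,false); (Gc,false); (Ga,true); (Gc,false); (Gb,false); (Gc,false); (Gb,true); (Gc,true); (Gc,true); (Ga,false)]
  | R2, Ga => [(Ga,false); (Gb,true); (Gc,false); (Ga,false); (Gb,true); (Gc,false); (Gb,false); (Gc,false); (Gb,true); (Gc,true); (Ga,true); (Gc,true); (Gb,false); (Ga,true); (Ga,false); (Gc,true); (Gb,true); (Gc,false); (Gb,false); (Ga,false); (Ga,false); (Gc,false); (Ga,true); (Ga,true); (Gb,true); (Ga,false)]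
  | _, _ => []
  end.

Lemma liftp_good : forall r s, goodb (liftp r s) (tgtp r s) = true.
Proof. intros [] []; vm_compute; reflexivity. Qed.


Lemma LPx_nil : forall x, LPx x [] [].
Proof. intros x. split; [|split]; intros; reflexivity. Qed.

Lemma LPx_app : forall x Q1 z1 Q2 z2, LPx x Q1 z1 -> LPx x Q2 z2 -> LPx x (Q1 ++ Q2) (z1 ++ z2).
Proof.
  intros x Q1 z1 Q2 z2 [A1 [B1 C1]] [A2 [B2 C2]]. split; [|split].
  - intros v. rewrite !act_app, A1, A2. reflexivity.
  - intros y v Hy. rewrite act_app, B1, B2; auto.
  - rewrite !expsum_app. lia.
Qed.

Lemma LPx_winv : forall x Q z, LPx x Q z -> LPx x (winv Q) (winv z).
Proof.
  intros x Q z [A [B C]]. split; [|split].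
  - intros v. rewrite <- (act_winv_l Q (x :: act (winv z) v)).
    rewrite A, act_winv_r. reflexivity.
  - intros y v Hy. rewrite <- (act_winv_l Q (y :: v)) at 2. rewrite B; auto.
  - rewrite !expsum_winv. lia.
Qed.

Lemma LPx_ext : forall x Q z z', LPx x Q z -> (forall v, act z v = act z' v) ->
  expsum z = expsum z' -> LPx x Q z'.
Proof.
  intros x Q z z' [A [B C]] H E. split; [|split]; auto.
  - intros v. rewrite A, H. reflexivity.
  - lia.
Qed.

Lemma tgtp_good : forall r s, LPx X1 (liftp r s) (tgtp r s).
Proof. intros. apply goodb_sound, liftp_good. Qed.

Definition tgtm (r : Res) (s : Gen) : word := apow r ++ [(s,true)] ++ winv (apow (prevp r)).

Lemma nextp_prevp : forall r, nextp (prevp r) = r.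
Proof. intros []; reflexivity. Qed.

Lemma tgtm_good : forall r s, LPx X1 (winv (liftp (prevp r) s)) (tgtm r s).
Proof.
  intros r s. pose proof (LPx_winv _ _ _ (tgtp_good (prevp r) s)) as H.
  unfold tgtp in H. rewrite nextp_prevp in H.
  assert (E : winv (apow (prevp r) ++ [(s,false)] ++ winv (apow r)) = tgtm r s).
  { unfold tgtm. rewrite !winv_app, winv_winv. rewrite <- app_assoc. reflexivity. }
  rewrite E in H. exact H.
Qed.

Fixpoint go (h : word) (r : Res) : word :=
  match h with
  | [] => []
  | (s, false) :: h' => liftp r s ++ go h' (nextp r)
  | (s, true) :: h' => winv (liftp (prevp r) s) ++ go h' (prevp r)
  end.
Fixpoint gotg (h : word) (r : Res) : word :=
  match h with
  | [] => []
  | (s, false) :: h' => tgtp r s ++ gotg h' (nextp r)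
  | (s, true) :: h' => tgtm r s ++ gotg h' (prevp r)
  end.
Fixpoint fin (h : word) (r : Res) : Res :=
  match h with
  | [] => r
  | (s, false) :: h' => fin h' (nextp r)
  | (s, true) :: h' => fin h' (prevp r)
  end.

Lemma go_LP : forall h r, LPx X1 (go h r) (gotg h r).
Proof.
  induction h as [|[s i] h IH]; intros r; [apply LPx_nil|].
  destruct i; simpl; apply LPx_app; auto using tgtp_good, tgtm_good.
Qed.

Lemma gotg_act : forall h r v, act (gotg h r) v = act (apow r ++ h ++ winv (apow (fin h r))) v.
Proof.
  induction h as [|[s i] h IH]; intros r v.
  - simpl. now rewrite act_w_winv.
  - destruct i; simpl; rewrite act_app, IH; unfold tgtm, tgtp;
    match goal with |- context [ (s, ?b) :: h ++ ?W ] =>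
      replace ((s, b) :: h ++ W) with ([(s,b)] ++ h ++ W) by reflexivity end;
    rewrite !act_app, act_winv_r; reflexivity.
Qed.

Lemma expsum_apow : forall r, expsum (apow r) = resZ r.
Proof. intros []; reflexivity. Qed.

Lemma gotg_es : forall h r, expsum (gotg h r) = (expsum h + resZ r - resZ (fin h r))%Z.
Proof.
  induction h as [|[s i] h IH]; intros r; [simpl; lia|].
  destruct i; cbn [gotg fin]; rewrite expsum_app, IH.
  - unfold tgtm. rewrite !expsum_app, expsum_winv.
    change (expsum ((s,true)::h)) with (-1 + expsum h)%Z.
    change (expsum [(s,true)]) with (-1)%Z. rewrite !expsum_apow.
    destruct r; cbn [prevp resZ]; lia.
  - unfold tgtp. rewrite !expsum_app, expsum_winv.
    change (expsum ((s,false)::h)) with (1 + expsum h)%Z.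
    change (expsum [(s,false)]) with 1%Z. rewrite !expsum_apow.
    destruct r; cbn [nextp resZ]; lia.
Qed.

Lemma fin_mod : forall h r, exists q, (resZ (fin h r) = resZ r + expsum h + 4 * q)%Z.
Proof.
  induction h as [|[s i] h IH]; intros r; [exists 0%Z; simpl; lia|].
  destruct i; cbn [fin].
  - destruct (IH (prevp r)) as [q Hq].
    change (expsum ((s,true)::h)) with (-1 + expsum h)%Z.
    destruct r; cbn [prevp resZ] in *; [exists (q+1)%Z|exists q|exists q|exists q]; lia.
  - destruct (IH (nextp r)) as [q Hq].
    change (expsum ((s,false)::h)) with (1 + expsum h)%Z.
    destruct r; cbn [nextp resZ] in *; [exists q|exists q|exists q|exists (q-1)%Z]; lia.
Qed.

Lemma liftX1 : forall h, (4 | expsum h)%Z -> exists Q, LPx X1 Q h.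
Proof.
  intros h [m Hm]. exists (go h R0).
  destruct (fin_mod h R0) as [q Hq]. cbn [resZ] in Hq.
  assert (Hf : fin h R0 = R0).
  { destruct (fin h R0); cbn [resZ] in Hq; auto; exfalso; lia. }
  eapply LPx_ext; [apply go_LP| |].
  - intros v. rewrite gotg_act, Hf. simpl. now rewrite app_nil_r.
  - rewrite gotg_es, Hf. cbn [resZ]. lia.
Qed.

Definition rotX (x : X) : X := match x with X1 => X2 | X2 => X3 | X3 => X1 end.
Definition rotG (s : Gen) : Gen := match s with Ga => Gb | Gb => Gc | Gc => Ga end.
Definition rotw (w : word) : word := map (fun l => (rotG (fst l), snd l)) w.

Lemma gact_rot : forall v s i, gact (rotG s) i (map rotX v) = map rotX (gact s i v).
Proof.
  induction v as [|x v IH]; intros s i; [reflexivity|].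
  destruct s, i, x; simpl; f_equal; try reflexivity;
  first [apply (IH Ga) | apply (IH Gb) | apply (IH Gc)].
Qed.

Lemma act_rot : forall w v, act (rotw w) (map rotX v) = map rotX (act w v).
Proof.
  induction w as [|[s i] w IH]; intros v; [reflexivity|].
  simpl rotw. rewrite !act_cons_l. simpl. rewrite gact_rot. apply IH.
Qed.

Lemma rotX3 : forall x, rotX (rotX (rotX x)) = x.
Proof. intros []; reflexivity. Qed.
Lemma rotv3 : forall v, map rotX (map rotX (map rotX v)) = v.
Proof. induction v; simpl; [reflexivity|]. now rewrite rotX3, IHv. Qed.
Lemma rotw3 : forall w, rotw (rotw (rotw w)) = w.
Proof. induction w as [|[[] i] w IH]; simpl; [reflexivity| | |]; now rewrite IH. Qed.
Lemma expsum_rot : forall w, expsum (rotw w) = expsum w.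
Proof. induction w as [|[s i] w IH]; [reflexivity|]. simpl rotw.
  change (expsum ((rotG s, i) :: rotw w)) with ((if i then -1 else 1) + expsum (rotw w))%Z.
  change (expsum ((s, i) :: w)) with ((if i then -1 else 1) + expsum w)%Z. now rewrite IH. Qed.

Lemma LPx_rot : forall x Q h, LPx x Q h -> LPx (rotX x) (rotw Q) (rotw h).
Proof.
  intros x Q h [A [B C]]. split; [|split].
  - intros v. rewrite <- (rotv3 v).
    change (rotX x :: map rotX (map rotX (map rotX v))) with (map rotX (x :: map rotX (map rotX v))).
    rewrite act_rot, A. simpl. f_equal. symmetry. apply act_rot.
  - intros y v Hy. rewrite <- (rotv3 v), <- (rotX3 y).
    change (rotX (rotX (rotX y)) :: map rotX (map rotX (map rotX v)))
      with (map rotX (rotX (rotX y) :: map rotX (map rotX v))).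
    rewrite act_rot, B; [reflexivity|].
    intros E. apply Hy. rewrite <- E. symmetry. apply rotX3.
  - rewrite !expsum_rot. exact C.
Qed.

Lemma liftX : forall x h, (4 | expsum h)%Z -> exists Q, LPx x Q h.
Proof.
  intros x h H. destruct x.
  - now apply liftX1.
  - destruct (liftX1 (rotw (rotw h))) as [Q HQ]. { now rewrite !expsum_rot. }
    exists (rotw Q). pose proof (LPx_rot _ _ _ HQ) as H2. now rewrite rotw3 in H2.
  - destruct (liftX1 (rotw h)) as [Q HQ]. { now rewrite !expsum_rot. }
    exists (rotw (rotw Q)). pose proof (LPx_rot _ _ _ (LPx_rot _ _ _ HQ)) as H2.
    now rewrite rotw3 in H2.
Qed.


Lemma X_eq_dec : forall x y : X, {x = y} + {x <> y}.
Proof. decide equality. Qed.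
Definition lX_dec := list_eq_dec X_eq_dec.

Lemma app_len_eq : forall (u u0 v t : list X), length u = length u0 -> u ++ v = u0 ++ t -> u = u0.
Proof.
  induction u as [|a u IH]; intros [|b u0] v t Hl He; simpl in *; try discriminate; auto.
  injection He as -> He. f_equal. eapply IH; eauto.
Qed.

Lemma noext : forall (u u0 v : list X), length u = length u0 -> u <> u0 -> ~ (exists t, u ++ v = u0 ++ t).
Proof. intros u u0 v Hl Hn [t Ht]. apply Hn. eapply app_len_eq; eauto. Qed.

Lemma pow2S : forall n, (2 ^ Z.of_nat (S n) = 2 * 2 ^ Z.of_nat n)%Z.
Proof. intros. rewrite Nat2Z.inj_succ, Z.pow_succ_r; lia. Qed.
Lemma pow2pos : forall n, (0 < 2 ^ Z.of_nat n)%Z.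
Proof. intros. apply Z.pow_pos_nonneg; lia. Qed.

Lemma deep : forall u, u <> [] -> forall h, (2 ^ Z.of_nat (S (length u)) | expsum h)%Z ->
  exists g, InRist u g /\ (forall v, act g (u ++ v) = u ++ act h v) /\
            (2 ^ Z.of_nat (length u) * expsum g = expsum h)%Z.
Proof.
  induction u as [|x u IH]; intros Hne h Hd; [congruence|].
  destruct u as [|y u'].
  - simpl in Hd. destruct (liftX x h) as [Q [A [B C]]].
    { destruct Hd as [m Hm]. exists m. lia. }
    exists Q. split; [|split].
    + intros [|z t] Hn; [apply act_nilv|].
      destruct (X_eq_dec z x) as [->|Hz].
      * exfalso. apply Hn. exists t. reflexivity.
      * now apply B.
    + intros v. simpl. apply A.
    + change (2 ^ Z.of_nat (length [x]))%Z with 2%Z. lia.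
  - remember (y :: u') as u eqn:Eu. assert (Hu : u <> []) by (subst; discriminate). clear Eu.
    destruct (IH Hu h) as [g' [Hr [Ha He]]].
    { destruct Hd as [m Hm]. exists (2 * m)%Z. rewrite Hm. simpl length. rewrite !pow2S. ring. }
    destruct (liftX x g') as [Q [A [B C]]].
    { destruct Hd as [m Hm]. exists m. simpl length in Hm. rewrite !pow2S in Hm.
      pose proof (pow2pos (length u)) as P.
      apply (Z.mul_cancel_l _ _ (2 ^ Z.of_nat (length u))); [lia|]. rewrite He, Hm. ring. }
    exists Q. split; [|split].
    + intros [|z t] Hn; [apply act_nilv|].
      destruct (X_eq_dec z x) as [->|Hz].
      * rewrite A, Hr; [reflexivity|]. intros [t' Ht']. apply Hn. exists t'. simpl. now f_equal.
      * now apply B.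
    + intros v. simpl. rewrite A. f_equal. apply Ha.
    + simpl length. rewrite pow2S. rewrite <- He. rewrite <- C. ring.
Qed.

Fixpoint secw (w : word) (u : list X) : word :=
  match u with [] => w | x :: u' => secw (snd (sec1 w x)) u' end.

Lemma act_app_sec : forall u w v, act w (u ++ v) = act w u ++ act (secw w u) v.
Proof.
  induction u as [|x u IH]; intros w v; simpl.
  - now rewrite act_nilv.
  - rewrite !act_sec1, IH. reflexivity.
Qed.

Lemma act_length : forall v w, length (act w v) = length v.
Proof.
  induction v as [|x v IH]; intros w; [now rewrite act_nilv|].
  rewrite act_sec1. simpl. now rewrite IH.
Qed.

Lemma es_t : forall g, expsum [(g,true)] = (-1)%Z. Proof. reflexivity. Qed.
Lemma es_f : forall g, expsum [(g,false)] = 1%Z. Proof. reflexivity. Qed.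
Lemma es_n : expsum [] = 0%Z. Proof. reflexivity. Qed.

Lemma es3 : forall w, (expsum (snd (sec1 w X1)) + expsum (snd (sec1 w X2)) + expsum (snd (sec1 w X3))
                       = 2 * expsum w)%Z.
Proof.
  induction w as [|[s i] w IH]; [reflexivity|].
  change (expsum ((s,i)::w)) with ((if i then -1 else 1) + expsum w)%Z.
  cbn [sec1 fst snd].
  destruct (sec1 w X1) as [z1 t1] eqn:E1, (sec1 w X2) as [z2 t2] eqn:E2,
           (sec1 w X3) as [z3 t3] eqn:E3.
  simpl snd in IH.
  destruct s, i; cbn [step]; rewrite ?E1, ?E2, ?E3; cbn [snd optw];
    rewrite ?expsum_app, ?es_t, ?es_f, ?es_n; lia.
Qed.

Definition sumZ (l : list Z) : Z := fold_right Z.add 0%Z l.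
Lemma sumZ_app : forall l1 l2, sumZ (l1 ++ l2) = (sumZ l1 + sumZ l2)%Z.
Proof. induction l1; simpl; intros; [lia|]. rewrite IHl1. lia. Qed.

Fixpoint allw (n : nat) : list (list X) :=
  match n with
  | O => [[]]
  | S n => map (cons X1) (allw n) ++ map (cons X2) (allw n) ++ map (cons X3) (allw n)
  end.

Lemma allw_in : forall n u, length u = n -> In u (allw n).
Proof.
  induction n as [|n IH]; intros [|x u] Hl; simpl in *; try discriminate; auto.
  injection Hl as Hl. apply IH in Hl.
  destruct x; repeat (apply in_or_app; first [left; now apply in_map | right]).
  now apply in_map.
Qed.

Lemma allw_len : forall n u, In u (allw n) -> length u = n.
Proof.
  induction n as [|n IH]; intros u H; simpl in H.
  - destruct H as [<-|[]]. reflexivity.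
  - repeat (apply in_app_or in H; destruct H as [H|H]);
    apply in_map_iff in H; destruct H as [u' [<- H]]; simpl; f_equal; auto.
Qed.

Lemma map_cons_nodup : forall (x : X) l, NoDup l -> NoDup (map (cons x) l).
Proof.
  intros x l H. induction H; simpl; constructor; auto.
  intros Hin. apply in_map_iff in Hin. destruct Hin as [y [Hy Hy']]. injection Hy as ->. auto.
Qed.

Lemma nodup_app : forall (l1 l2 : list (list X)), NoDup l1 -> NoDup l2 ->
  (forall a, In a l1 -> ~ In a l2) -> NoDup (l1 ++ l2).
Proof.
  induction l1 as [|a l1 IH]; intros l2 H1 H2 Hd; simpl; auto.
  inversion H1; subst. constructor.
  - intros Hin. apply in_app_or in Hin. destruct Hin as [Hin|Hin]; [auto|].
    apply (Hd a); simpl; auto.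
  - apply IH; auto. intros b Hb. apply Hd. simpl; auto.
Qed.

Lemma allw_nodup : forall n, NoDup (allw n).
Proof.
  induction n as [|n IH]; simpl.
  - constructor; [simpl; tauto|constructor].
  - apply nodup_app; [now apply map_cons_nodup| apply nodup_app; [now apply map_cons_nodup|now apply map_cons_nodup|]|];
    intros a Ha Hb; repeat (apply in_app_or in Hb; destruct Hb as [Hb|Hb]);
    apply in_map_iff in Ha, Hb; destruct Ha as [? [<- _]]; destruct Hb as [? [E _]]; discriminate.
Qed.

Lemma es_level : forall n w,
  sumZ (map (fun u => expsum (secw w u)) (allw n)) = (2 ^ Z.of_nat n * expsum w)%Z.
Proof.
  induction n as [|n IH]; intros w.
  - cbn [allw map secw sumZ fold_right]. change (2 ^ Z.of_nat 0)%Z with 1%Z. lia.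
  - cbn [allw]. rewrite !map_app, !sumZ_app, !map_map. cbn [secw].
    rewrite !IH, pow2S.
    replace (2 * 2 ^ Z.of_nat n * expsum w)%Z with (2 ^ Z.of_nat n * (2 * expsum w))%Z by ring.
    rewrite <- (es3 w). ring.
Qed.


Definition T (w : word) (x : X) : X := fst (sec1 w x).
Lemma T_cons : forall l w x, T (l :: w) x = T w (fst (step (fst l) (snd l) x)).
Proof. intros. unfold T. simpl. destruct (step _ _ x) as [y o]. simpl. destruct (sec1 w y). reflexivity. Qed.

Definition perms6 : list (X*X*X) :=
  [(X1,X2,X3); (X2,X1,X3); (X1,X3,X2); (X3,X2,X1); (X2,X3,X1); (X3,X1,X2)].
Definition sgn3 (t : X*X*X) : bool :=
  match t with (X1,X2,X3) | (X2,X3,X1) | (X3,X1,X2) => false | _ => true end.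

Lemma parity : forall w, In (T w X1, T w X2, T w X3) perms6 /\
                         sgn3 (T w X1, T w X2, T w X3) = Z.odd (expsum w).
Proof.
  induction w as [|[s i] w [Hin Hs]]; [split; [simpl; auto| reflexivity]|].
  rewrite !T_cons. change (expsum ((s,i)::w)) with ((if i then -1 else 1) + expsum w)%Z.
  rewrite Z.odd_add, <- Hs.
  simpl in Hin. destruct Hin as [H|[H|[H|[H|[H|[H|[]]]]]]]; injection H as H1 H2 H3;
  destruct s, i; cbn [step fst snd]; rewrite <- H1, <- H2, <- H3;
  split; try reflexivity; simpl; tauto.
Qed.

Lemma act_single : forall w y, act w [y] = [T w y].
Proof. intros. rewrite act_sec1, act_nilv. reflexivity. Qed.

Lemma fix1_even : forall w, (forall y, act w [y] = [y]) -> (2 | expsum w)%Z.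
Proof.
  intros w H. destruct (parity w) as [_ Hs].
  assert (E : forall y, T w y = y).
  { intros y. specialize (H y). rewrite act_single in H. now injection H. }
  rewrite !E in Hs. simpl in Hs.
  destruct (Z.Even_or_Odd (expsum w)) as [[m Hm]|Ho].
  - exists m. lia.
  - apply Z.odd_spec in Ho. congruence.
Qed.

Lemma rist_winv : forall u r, InRist u r -> InRist u (winv r).
Proof.
  intros u r H v Hv. rewrite <- (H v Hv) at 1. apply act_winv_l.
Qed.

Lemma rist_own : forall u r, InRist u r -> act r u = u.
Proof.
  intros u r H. destruct (lX_dec (act r u) u) as [E|Hne]; [exact E|exfalso].
  set (u' := act r u) in *.
  assert (Hl : length u' = length u) by apply act_length.
  assert (Hu' : act r u' = u').
  { apply H. intros [t Ht]. apply Hne. rewrite <- (app_nil_r u') in Ht.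
    eapply app_len_eq; eauto. }
  apply Hne. transitivity (act (winv r) (act r u')).
  - rewrite act_winv_l. reflexivity.
  - rewrite Hu'. unfold u'. apply act_winv_l.
Qed.

Lemma rist_fixlen : forall u r u', InRist u r -> length u' = length u -> act r u' = u'.
Proof.
  intros u r u' H Hl. destruct (lX_dec u' u) as [->|Hne].
  - now apply rist_own.
  - apply H. intros [t Ht]. apply Hne. rewrite <- (app_nil_r u') in Ht.
    eapply app_len_eq; eauto.
Qed.

Lemma rist_fix1 : forall u r, u <> [] -> InRist u r -> forall y, act r [y] = [y].
Proof.
  intros u r Hne H y. destruct (lX_dec u [y]) as [->|Hn].
  - now apply rist_own.
  - apply H. intros [t Ht]. destruct u as [|z u']; [congruence|].
    simpl in Ht. injection Ht as -> Ht. destruct u'; [|discriminate]. congruence.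
Qed.

Lemma rist_even : forall u r, u <> [] -> InRist u r -> (2 | expsum r)%Z.
Proof. intros. apply fix1_even. eapply rist_fix1; eauto. Qed.

Lemma sec_own : forall u f v, InRist u f -> act f (u ++ v) = u ++ act (secw f u) v.
Proof. intros. rewrite act_app_sec, rist_own; auto. Qed.

Lemma sec_triv : forall u f u' t, InRist u f -> length u' = length u -> u' <> u ->
  act (secw f u') t = t.
Proof.
  intros u f u' t H Hl Hn.
  assert (E : act f (u' ++ t) = u' ++ t) by (apply H; now apply noext).
  rewrite act_app_sec, (rist_fixlen u) in E; auto.
  eapply app_inv_head; eauto.
Qed.

Lemma act_concat_triv : forall L t, (forall w, In w L -> forall t, act w t = t) -> act (concat L) t = t.
Proof.
  induction L as [|w L IH]; intros t H; [reflexivity|].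
  simpl. rewrite act_app, (H w (or_introl eq_refl)).
  apply IH. intros; apply H; simpl; auto.
Qed.

Definition allsec (f : word) (u : list X) (k : nat) : word :=
  secw f u ++ concat (map (secw f) (remove lX_dec u (allw k))).

Lemma allsec_act : forall f u k t, InRist u f -> length u = k ->
  act (allsec f u k) t = act (secw f u) t.
Proof.
  intros f u k t H Hl. unfold allsec. rewrite act_app, act_concat_triv; auto.
  intros w Hw t'. apply in_map_iff in Hw. destruct Hw as [u' [<- Hu']].
  apply in_remove in Hu'. destruct Hu' as [Hin Hne].
  eapply sec_triv; eauto. apply allw_len in Hin. congruence.
Qed.

Lemma expsum_concat : forall L, expsum (concat L) = sumZ (map expsum L).
Proof. induction L; simpl; [reflexivity|]. rewrite expsum_app, IHL. reflexivity. Qed.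

Lemma sum_remove : forall (g : list X -> Z) u l, NoDup l -> In u l ->
  sumZ (map g l) = (g u + sumZ (map g (remove lX_dec u l)))%Z.
Proof.
  intros g u l Hnd. induction Hnd as [|a l Ha Hnd IH]; intros Hin; [destruct Hin|].
  simpl. destruct (lX_dec u a) as [->|Hne].
  - rewrite notin_remove; auto.
  - destruct Hin as [->|Hin]; [congruence|]. simpl. rewrite IH; auto. lia.
Qed.

Lemma allsec_es : forall f u k, length u = k ->
  expsum (allsec f u k) = (2 ^ Z.of_nat k * expsum f)%Z.
Proof.
  intros f u k Hl. unfold allsec. rewrite expsum_app, expsum_concat, map_map.
  rewrite <- (es_level k f).
  rewrite (sum_remove (fun u => expsum (secw f u)) u (allw k)); auto using allw_nodup, allw_in.
Qed.


Definition fw (p : list X * word * bool) : word :=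
  if snd p then winv (snd (fst p)) else snd (fst p).

Definition Wsec (l : list (list X * word * bool)) (u : list X) (k : nat) : word :=
  concat (map (fun p => if lX_dec (fst (fst p)) u then allsec (fw p) u k else []) l).

Lemma fw_rist : forall p, InRist (fst (fst p)) (snd (fst p)) -> InRist (fst (fst p)) (fw p).
Proof. intros [[u r] [|]] H; unfold fw; simpl in *; auto. apply rist_winv; exact H. Qed.

Lemma skipn_len : forall (u t : list X), skipn (length u) (u ++ t) = t.
Proof. induction u; simpl; auto. Qed.

Lemma Wsec_act : forall k l, (forall p, In p l -> length (fst (fst p)) = k /\ InRist (fst (fst p)) (snd (fst p))) ->
  forall u, length u = k -> forall v, act (concat (map fw l)) (u ++ v) = u ++ act (Wsec l u k) v.
Proof.
  intros k l. induction l as [|p l IH]; intros Hl u Hu v; [reflexivity|].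
  unfold Wsec. cbn [map concat]. fold (Wsec l u k).
  rewrite !act_app.
  destruct (Hl p (or_introl eq_refl)) as [Hlen Hr]. apply fw_rist in Hr.
  assert (Hl' : forall p, In p l -> length (fst (fst p)) = k /\ InRist (fst (fst p)) (snd (fst p)))
    by (intros; apply Hl; simpl; auto).
  destruct (lX_dec (fst (fst p)) u) as [E|Ne].
  - rewrite E in Hr. rewrite sec_own by exact Hr. rewrite IH by auto.
    rewrite (allsec_act _ _ _ _ Hr Hu). reflexivity.
  - rewrite Hr. { simpl. apply IH; auto. }
    apply noext; [congruence|]. intros E; apply Ne; auto.
Qed.

Lemma Wsec_div : forall k l u, (1 <= k)%nat ->
  (forall p, In p l -> length (fst (fst p)) = k /\ InRist (fst (fst p)) (snd (fst p))) ->
  (2 ^ Z.of_nat (S k) | expsum (Wsec l u k))%Z.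
Proof.
  intros k l u Hk. induction l as [|p l IH]; intros Hl; [exists 0%Z; reflexivity|].
  unfold Wsec. cbn [map concat]. fold (Wsec l u k).
  rewrite expsum_app. apply Z.divide_add_r; [|apply IH; intros; apply Hl; simpl; auto].
  destruct (Hl p (or_introl eq_refl)) as [Hlen Hr]. apply fw_rist in Hr.
  destruct (lX_dec (fst (fst p)) u) as [E|Ne]; [|exists 0%Z; reflexivity].
  rewrite allsec_es by (rewrite <- E; exact Hlen).
  destruct (rist_even (fst (fst p)) (fw p)) as [m Hm]; auto.
  { intros E'. rewrite E' in Hlen. simpl in Hlen. lia. }
  exists m. rewrite Hm, pow2S. ring.
Qed.

Lemma build : forall k h, (1 <= k)%nat -> forall L, NoDup L -> (forall u, In u L -> length u = k) ->
  (forall u, In u L -> InH k (h u)) ->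
  exists l, (forall p, In p l -> length (fst (fst p)) = k /\ InRist (fst (fst p)) (snd (fst p))) /\
   forall u, length u = k -> forall v,
     act (concat (map fw l)) (u ++ v) = u ++ (if in_dec lX_dec u L then act (h u) v else v).
Proof.
  intros k h Hk L Hnd. induction Hnd as [|u0 L Hn Hnd IH]; intros HL HH.
  - exists []. split; [intros p []|]. intros u Hu v. simpl. reflexivity.
  - destruct IH as [l [Hl Hact]]; [intros; apply HL; simpl; auto|intros; apply HH; simpl; auto|].
    destruct (HH u0 (or_introl eq_refl)) as [w0 [Heqv Hdiv]].
    assert (Hlen0 : length u0 = k) by (apply HL; simpl; auto).
    destruct (deep u0) with (h := w0) as [g [Hr [Ha _]]].
    { intros E. rewrite E in Hlen0. simpl in Hlen0. lia. }
    { now rewrite Hlen0. }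
    exists (l ++ [(u0, g, false)]). split.
    + intros p Hp. apply in_app_or in Hp. destruct Hp as [Hp|[<-|[]]]; auto.
    + intros u Hu v. rewrite map_app, concat_app, act_app, Hact by exact Hu.
      cbn [map concat fw fst snd]. rewrite app_nil_r.
      destruct (lX_dec u u0) as [->|Ne].
      * destruct (in_dec lX_dec u0 L) as [Hin|_]; [contradiction|].
        destruct (in_dec lX_dec u0 (u0 :: L)) as [_|Hno]; [|exfalso; apply Hno; simpl; auto].
        rewrite Ha. f_equal. apply Heqv.
      * rewrite Hr. 2: { apply noext; congruence. }
        destruct (in_dec lX_dec u L) as [Hin|Hnin];
        destruct (in_dec lX_dec u (u0 :: L)) as [Hin'|Hnin']; auto.
        -- exfalso. apply Hnin'. simpl; auto.
        -- exfalso. destruct Hin' as [E|E]; [congruence|auto].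
Qed.

Theorem theorem5p5 :
  forall (k : nat), (1 <= k)%nat ->
  forall h : list X -> word,
    ((exists w, InRistLevel k w /\
        forall u, length u = k -> forall v, sect w u v = act (h u) v)
     <-> (forall u, length u = k -> InH k (h u)))
    /\
    ((exists w, InRist (ones k) w /\
        forall u, length u = k -> forall v, sect w u v = act (h u) v)
     <-> (InH k (h (ones k)) /\
          forall u, length u = k -> u <> ones k -> equiv (h u) nil)).
Proof.
  intros k Hk h.
  assert (Hones : length (ones k) = k) by apply repeat_length.
  assert (Hone_ne : ones k <> []).
  { intros E. rewrite E in Hones. simpl in Hones. lia. }
  split; split.
  - intros [w [[l [Hl Heq]] Hs]] u Hu. exists (Wsec l u k). split.
    + intros v. rewrite <- Hs by exact Hu. unfold sect. rewrite Heq.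
      change (fun p : list X * word * bool => if snd p then winv (snd (fst p)) else snd (fst p)) with fw.
      rewrite (Wsec_act k l Hl u Hu v), skipn_len. reflexivity.
    + now apply Wsec_div.
  - intros H.
    destruct (build k h Hk (allw k) (allw_nodup k)) as [l [Hl Hact]].
    { intros; now apply allw_len. }
    { intros; apply H; now apply allw_len. }
    exists (concat (map fw l)). split.
    + exists l. split; [exact Hl|]. intros x. reflexivity.
    + intros u Hu v. unfold sect. rewrite Hact by exact Hu.
      destruct (in_dec lX_dec u (allw k)) as [_|Hno].
      * apply skipn_len.
      * exfalso. apply Hno. now apply allw_in.
  - intros [w [Hr Hs]]. split.
    + exists (allsec w (ones k) k). split.
      * intros v. rewrite allsec_act by auto. rewrite <- Hs by exact Hones.
        unfold sect. rewrite sec_own by exact Hr. now rewrite skipn_len.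
      * rewrite allsec_es by exact Hones.
        destruct (rist_even _ _ Hone_ne Hr) as [m Hm].
        exists m. rewrite Hm, pow2S. ring.
    + intros u Hu Hne v. rewrite <- Hs by exact Hu. unfold sect.
      rewrite Hr. { rewrite skipn_len. reflexivity. }
      apply noext; congruence.
  - intros [[w0 [Heqv Hdiv]] Htriv].
    destruct (deep (ones k) Hone_ne w0) as [g [Hr [Ha _]]].
    { now rewrite Hones. }
    exists g. split; [exact Hr|]. intros u Hu v. unfold sect.
    destruct (lX_dec u (ones k)) as [->|Ne].
    + rewrite Ha, skipn_len. apply Heqv.
    + rewrite Hr. 2: { apply noext; congruence. }
      rewrite skipn_len. rewrite (Htriv u Hu Ne v). reflexivity.
Qed.
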